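(* Let $n\ge2$, let $\gamma:I\to S^n$ be a spherical unit speed curve whose spherical dual curve $\mathbf{u}_n$ is non-singular (i.e. $\mathbf{u}_n'(s)\neq\mathbf{0}$ for all $s\in I$), let $s_0\in I$ and let $P\in S^{n-2}_{\mathbf{u}_{n-2}(s_0)}$. Then: (1) the germ $ort_{\gamma,P}:(I,s_0)\to S^n$ is $\mathcal{L}$-equivalent to $ped_{\gamma,P}:(I,s_0)\to S^n$; (2) the germ $ort_{\gamma,P}:(I,s_0)\to S^n$ is not $\mathcal{A}$-equivalent to $\mathbf{u}_n:(I,s_0)\to S^n$.
   Context: $I\subset\mathbb{R}$ is an open interval and $S^n$ the unit sphere in $\mathbb{R}^{n+1}$; the dot denotes the Euclidean inner product. A regular curve $\gamma:I\to S^n$ is a spherical unit speed curve if, setting $\mathbf{u}_{-1}\equiv\mathbf{0}$, $\mathbf{u}_0=\gamma$, $\|\mathbf{u}_0'\|\equiv 1$, $\kappa_0\equiv 0$, the maps $\mathbf{u}_i(s)=\dfrac{\mathbf{u}_{i-1}'(s)+\kappa_{i-1}(s)\mathbf{u}_{i-2}(s)}{\|\mathbf{u}_{i-1}'(s)+\kappa_{i-1}(s)\mathbf{u}_{i-2}(s)\|}$ with $\kappa_i(s)=\|\mathbf{u}_{i-1}'(s)+\kappa_{i-1}(s)\mathbf{u}_{i-2}(s)\|>0$ are well-defined for $1\le i\le n-1$ and all $s\in I$. Then $\mathbf{u}_0(s),\dots,\mathbf{u}_{n-1}(s)$ are orthonormal, and the spherical dual curve $\mathbf{u}_n:I\to S^n$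 is defined by requiring $\mathbf{u}_0(s),\dots,\mathbf{u}_n(s)$ orthonormal with $\det(\mathbf{u}_0(s),\dots,\mathbf{u}_n(s))=1$. For $P\in S^n$ with $P\cdot\mathbf{u}_n(s)\neq\pm1$, the spherical pedal curve is $ped_{\gamma,P}(s)=\dfrac{P-(P\cdot\mathbf{u}_n(s))\mathbf{u}_n(s)}{\sqrt{1-(P\cdot\mathbf{u}_n(s))^2}}$ (defined as a germ at $s_0$ when $P\neq\pm\mathbf{u}_n(s_0)$). For any $P\in S^n$ the spherical orthotomic curve is $ort_{\gamma,P}(s)=P-2(P\cdot\mathbf{u}_n(s))\mathbf{u}_n(s)$. For $-1\le i\le n$, $S^i_{\mathbf{u}_i(s)}=(S^n\setminus\{\pm\mathbf{u}_n(s)\})\cap\sum_{j=-1}^{i}\mathbb{R}\mathbf{u}_j(s)$. Two germs $f,g:(I,s_0)\to S^n$ are $\mathcal{L}$-equivalent if there is a germ of $C^\infty$ diffeomorphism $\psi:(S^n,f(s_0))\to(S^n,g(s_0))$ with $g=\psi\circ f$; they are $\mathcal{A}$-equivalent if there are germs of $C^\infty$ diffeomorphisms $\phi:(I,s_0)\to(I,s_0)$ and $\psi:(S^n,f(s_0))\to(S^n,g(s_0))$ with $g\circ\phi=\psi\circ f$. *)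

(* Defs.v *)
From Stdlib Require Import Reals Lra Lia.
Open Scope R_scope.

(* Points of R^{n+1} are represented as  nat -> R ; only coordinates 0..n matter. *)
Definition vec := nat -> R.
Definition vzero : vec := fun _ => 0.
Definition vadd (x y : vec) : vec := fun i => x i + y i.
Definition vopp (x : vec) : vec := fun i => - x i.
Definition vscale (a : R) (x : vec) : vec := fun i => a * x i.

Definition dot (n : nat) (x y : vec) : R := sum_f_R0 (fun i => x i * y i) n.
Definition vnorm (n : nat) (x : vec) : R := sqrt (dot n x x).
Definition vdist (n : nat) (x y : vec) : R := vnorm n (vadd x (vopp y)).
Definition veq (n : nat) (x y : vec) : Prop := forall i, (i <= n)%nat -> x i = y i.
Definition sphere (n : nat) (x : vec) : Prop := dot n x x = 1.
Definition ball (n : nat) (p : vec) (r : R) (x : vec) : Prop := vdist n x p < r.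

Fixpoint det (k : nat) (M : nat -> nat -> R) : R :=
  match k with
  | O => 1
  | S k' => sum_f_R0 (fun i => (-1) ^ i * M i O *
               det k' (fun r c => M (if Nat.ltb r i then r else S r) (S c))) k'
  end.

Definition is_open_interval (I : R -> Prop) : Prop :=
  (exists x, I x) /\
  (forall x y z, I x -> I z -> x <= y <= z -> I y) /\
  (forall x, I x -> exists e, e > 0 /\ forall y, Rabs (y - x) < e -> I y).

(* C^infinity real functions on a set J : a family closed under differentiation on J. *)
Definition smooth1_on (J : R -> Prop) (f : R -> R) : Prop :=
  exists F : (R -> R) -> Prop, F f /\
    forall g, F g -> exists h, F h /\ forall t, J t -> derivable_pt_lim g t (h t).

Definition vderiv (n : nat) (c : R -> vec) (s : R) (d : vec) : Prop :=
  forall i, (i <= n)%nat -> derivable_pt_lim (fun t => c t i) s (d i).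

(* C^infinity functions R^{n+1} -> R on an (open) set U: a family of functions,
   continuous on U, closed under all partial derivatives on U. *)
Definition upd (x : vec) (i : nat) (t : R) : vec :=
  fun j => if Nat.eqb j i then t else x j.
Definition partial_at (f : vec -> R) (i : nat) (x : vec) (d : R) : Prop :=
  derivable_pt_lim (fun t => f (upd x i t)) (x i) d.
Definition cont_on (n : nat) (U : vec -> Prop) (f : vec -> R) : Prop :=
  forall x, U x -> forall e, e > 0 -> exists d, d > 0 /\
    forall y, vdist n y x < d -> Rabs (f y - f x) < e.
Definition smooth_on (n : nat) (U : vec -> Prop) (f : vec -> R) : Prop :=
  exists F : (vec -> R) -> Prop, F f /\
    forall g, F g -> cont_on n U g /\
      forall i, (i <= n)%nat -> exists h, F h /\ forall x, U x -> partial_at g i x (h x).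
Definition smooth_map_on (n : nat) (U : vec -> Prop) (psi : vec -> vec) : Prop :=
  forall i, (i <= n)%nat -> smooth_on n U (fun x => psi x i).

(* Germ of C^infinity diffeomorphism (S^n,p) -> (S^n,q): psi is (near p) the restriction
   of a smooth ambient map, with a smooth inverse germ phi at q. *)
Definition sphere_diffeo_germ (n : nat) (p q : vec) (psi : vec -> vec) : Prop :=
  exists eps, eps > 0 /\ exists phi : vec -> vec,
    veq n (psi p) q /\
    smooth_map_on n (ball n p eps) psi /\
    smooth_map_on n (ball n q eps) phi /\
    (forall x, sphere n x -> ball n p eps x -> sphere n (psi x) /\ veq n (phi (psi x)) x) /\
    (forall y, sphere n y -> ball n q eps y -> sphere n (phi y) /\ veq n (psi (phi y)) y).

Definition real_diffeo_germ (s0 : R) (phi : R -> R) : Prop :=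
  exists eps, eps > 0 /\ exists chi : R -> R,
    phi s0 = s0 /\
    smooth1_on (fun s => Rabs (s - s0) < eps) phi /\
    smooth1_on (fun s => Rabs (s - s0) < eps) chi /\
    (forall s, Rabs (s - s0) < eps -> chi (phi s) = s /\ phi (chi s) = s).

Definition L_equiv (n : nat) (I : R -> Prop) (s0 : R) (f g : R -> vec) : Prop :=
  exists psi, sphere_diffeo_germ n (f s0) (g s0) psi /\
    exists d, d > 0 /\ forall s, I s -> Rabs (s - s0) < d -> veq n (g s) (psi (f s)).

Definition A_equiv (n : nat) (I : R -> Prop) (s0 : R) (f g : R -> vec) : Prop :=
  exists phi psi, real_diffeo_germ s0 phi /\ sphere_diffeo_germ n (f s0) (g s0) psi /\
    exists d, d > 0 /\ forall s, I s -> Rabs (s - s0) < d -> veq n (g (phi s)) (psi (f s)).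

(* gamma : I -> S^n is a spherical unit speed curve, with the maps u_i (0 <= i <= n-1)
   and curvatures kappa_i as in the construction (u_{-1} = 0 is encoded by kappa_0 = 0). *)
Definition spherical_unit_speed (n : nat) (I : R -> Prop) (gamma : R -> vec)
    (u : nat -> R -> vec) (kappa : nat -> R -> R) : Prop :=
  (forall i, (i <= n)%nat -> smooth1_on I (fun s => gamma s i)) /\
  (forall s, I s -> sphere n (gamma s)) /\
  u O = gamma /\
  (forall s, kappa O s = 0) /\
  (forall s, I s -> exists d, vderiv n gamma s d /\ vnorm n d = 1) /\
  (forall i s, (1 <= i <= n - 1)%nat -> I s ->
     exists d, vderiv n (u (i - 1)%nat) s d /\
       let w := vadd d (vscale (kappa (i - 1)%nat s) (u (i - 2)%nat s)) in
       kappa i s = vnorm n w /\ kappa i s > 0 /\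
       veq n (u i s) (vscale (/ kappa i s) w)).

Definition spherical_dual (n : nat) (I : R -> Prop) (u : nat -> R -> vec) (un : R -> vec) : Prop :=
  forall s, I s ->
    dot n (un s) (un s) = 1 /\
    (forall j, (j < n)%nat -> dot n (u j s) (un s) = 0) /\
    det (S n) (fun i j => (if Nat.ltb j n then u j s else un s) i) = 1.

Definition ped (n : nat) (P : vec) (un : R -> vec) (s : R) : vec :=
  vscale (/ sqrt (1 - (dot n P (un s)) ^ 2))
         (vadd P (vscale (- dot n P (un s)) (un s))).

Definition ort (n : nat) (P : vec) (un : R -> vec) (s : R) : vec :=
  vadd P (vscale (- (2 * dot n P (un s))) (un s)).

(* P in S^{n-2}_{u_{n-2}(s0)} = (S^n \ {+-u_n(s0)}) cap span(u_{-1},...,u_{n-2})(s0). *)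
Definition in_S_n_minus_2 (n : nat) (u : nat -> R -> vec) (un : R -> vec) (s0 : R) (P : vec) : Prop :=
  sphere n P /\ ~ veq n P (un s0) /\ ~ veq n P (vopp (un s0)) /\
  exists c : nat -> R,
    veq n P (fun k => sum_f_R0 (fun j => c j * u j s0 k) (n - 2)).

(* Main.v *)
Require Import Defs.
From Stdlib Require Import Reals Lra Lia FunctionalExtensionality.
Open Scope R_scope.

Lemma dpl_ext (f g : R -> R) x l :
  (forall t, f t = g t) -> derivable_pt_lim f x l -> derivable_pt_lim g x l.
Proof. intros H D. replace g with f; [exact D|]. extensionality t; auto. Qed.

Lemma dpl_loc (f g : R -> R) x l d : d > 0 ->
  (forall t, Rabs (t - x) < d -> f t = g t) -> derivable_pt_lim f x l -> derivable_pt_lim g x l.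
Proof.
  intros Hd H D e He. destruct (D e He) as [del Hdel].
  assert (Hm : 0 < Rmin del d) by (apply Rmin_pos; [apply cond_pos|lra]).
  exists (mkposreal _ Hm). intros h Hh Hh2. simpl in Hh2.
  assert (Hh3 : Rabs h < d) by (apply Rlt_le_trans with (1 := Hh2); apply Rmin_r).
  rewrite <- (H (x + h)), <- (H x).
  apply Hdel; auto. apply Rlt_le_trans with (1 := Hh2); apply Rmin_l.
  replace (x - x) with 0 by ring. rewrite Rabs_R0; lra.
  replace (x + h - x) with h by ring. auto.
Qed.

Lemma dpl_unique_loc (f g : R -> R) x l1 l2 d : d > 0 ->
  (forall t, Rabs (t - x) < d -> f t = g t) -> derivable_pt_lim f x l1 -> derivable_pt_lim g x l2 -> l1 = l2.
Proof.
  intros Hd H D1 D2. apply (uniqueness_limite g x); auto. eapply dpl_loc; eauto.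
Qed.

Lemma upd_same x i : upd x i (x i) = x.
Proof. extensionality j. unfold upd. destruct (Nat.eqb_spec j i); subst; auto. Qed.
Lemma upd_upd x i a b : upd (upd x i a) i b = upd x i b.
Proof. extensionality j. unfold upd. destruct (Nat.eqb j i); auto. Qed.
Lemma upd_eq x i a : upd x i a i = a.
Proof. unfold upd. rewrite Nat.eqb_refl. auto. Qed.

Lemma dot_S n x y : dot (S n) x y = dot n x y + x (S n) * y (S n).
Proof. reflexivity. Qed.

Lemma dot_ext n x y x' y' : veq n x x' -> veq n y y' -> dot n x y = dot n x' y'.
Proof. intros H1 H2. unfold dot. apply sum_eq. intros i Hi. rewrite H1, H2; auto. Qed.

Lemma dot_deriv n (c1 c2 : R -> vec) d1 d2 s :
  vderiv n c1 s d1 -> vderiv n c2 s d2 ->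
  derivable_pt_lim (fun t => dot n (c1 t) (c2 t)) s (dot n d1 (c2 s) + dot n (c1 s) d2).
Proof.
  intros H1 H2. induction n.
  - unfold dot; simpl. apply (derivable_pt_lim_mult (fun t => c1 t 0%nat) (fun t => c2 t 0%nat)); auto.
  - assert (IH : derivable_pt_lim (fun t => dot n (c1 t) (c2 t)) s (dot n d1 (c2 s) + dot n (c1 s) d2)).
    { apply IHn; intros i Hi; [apply H1|apply H2]; lia. }
    rewrite !dot_S.
    replace (dot n d1 (c2 s) + d1 (S n) * c2 s (S n) + (dot n (c1 s) d2 + c1 s (S n) * d2 (S n)))
      with ((dot n d1 (c2 s) + dot n (c1 s) d2) + (d1 (S n) * c2 s (S n) + c1 s (S n) * d2 (S n))) by ring.
    apply (derivable_pt_lim_plus (fun t => dot n (c1 t) (c2 t)) (fun t => c1 t (S n) * c2 t (S n))); auto.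
    apply (derivable_pt_lim_mult (fun t => c1 t (S n)) (fun t => c2 t (S n))); auto.
Qed.

Lemma dot_zero_l n y : dot n (fun _ => 0) y = 0.
Proof. induction n; [unfold dot; simpl; ring| rewrite dot_S, IHn; ring]. Qed.

Lemma vderiv_const n (A : vec) s : vderiv n (fun _ => A) s (fun _ => 0).
Proof. intros i _. apply derivable_pt_lim_const. Qed.

Lemma dot_comm n x y : dot n x y = dot n y x.
Proof. unfold dot; apply sum_eq; intros; ring. Qed.

Lemma dot_lin n a b x y z : dot n (fun k => a * x k + b * y k) z = a * dot n x z + b * dot n y z.
Proof. induction n; [unfold dot; simpl; ring | rewrite !dot_S, IHn; ring]. Qed.

Lemma sum_term_le (f : nat -> R) n j : (forall i, 0 <= f i) -> (j <= n)%nat -> f j <= sum_f_R0 f n.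
Proof.
  intros Hf Hj. induction n.
  - assert (j = 0%nat) by lia; subst; simpl; lra.
  - simpl. destruct (Nat.eq_dec j (S n)) as [->|Hne].
    + assert (0 <= sum_f_R0 f n) by (apply cond_pos_sum; auto). lra.
    + assert (f j <= sum_f_R0 f n) by (apply IHn; lia). specialize (Hf (S n)). lra.
Qed.

Lemma vdist_sq n y x : vdist n y x = sqrt (sum_f_R0 (fun j => (y j - x j) * (y j - x j)) n).
Proof. unfold vdist, vnorm, dot, vadd, vopp. reflexivity. Qed.

Lemma coord_le n y x j : (j <= n)%nat -> Rabs (y j - x j) <= vdist n y x.
Proof.
  intros Hj. rewrite vdist_sq. rewrite <- sqrt_Rsqr_abs. unfold Rsqr.
  apply sqrt_le_1_alt. apply (sum_term_le (fun j => (y j - x j) * (y j - x j))); auto.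
  intros i; apply Rle_0_sqr.
Qed.

Lemma sqnn (x:R) : 0 <= x * x.
Proof. apply Rle_0_sqr. Qed.

Lemma vdist_le n x b a : (forall j, (j <= n)%nat -> Rabs (x j - a j) <= Rabs (b j - a j)) ->
  vdist n x a <= vdist n b a.
Proof.
  intros H. rewrite !vdist_sq. apply sqrt_le_1_alt. apply sum_Rle. intros j Hj.
  specialize (H j Hj). 
  assert (0 <= Rabs (x j - a j)) by apply Rabs_pos.
  replace ((x j - a j)*(x j - a j)) with (Rabs (x j - a j) * Rabs (x j - a j))
    by (rewrite <- Rabs_mult; rewrite Rabs_pos_eq; [ring|apply sqnn]).
  replace ((b j - a j)*(b j - a j)) with (Rabs (b j - a j) * Rabs (b j - a j))
    by (rewrite <- Rabs_mult; rewrite Rabs_pos_eq; [ring|apply sqnn]).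
  nra.
Qed.

Lemma vdist_veq0 n x y : veq n x y -> vdist n y x = 0.
Proof.
  intros H. rewrite vdist_sq. rewrite <- sqrt_0. f_equal.
  transitivity (sum_f_R0 (fun _ => 0) n). apply sum_eq; intros i Hi; rewrite H; auto; ring.
  clear; induction n; simpl; [ring| rewrite IHn; ring].
Qed.

Lemma vdist_veq_r n x a a' : veq n a a' -> vdist n x a = vdist n x a'.
Proof. intros H. rewrite !vdist_sq. f_equal. apply sum_eq; intros i Hi; rewrite H; auto. Qed.

Lemma vdist_veq_l n x x' a : veq n x x' -> vdist n x a = vdist n x' a.
Proof. intros H. rewrite !vdist_sq. f_equal. apply sum_eq; intros i Hi; rewrite H; auto. Qed.

Lemma vdist_pos n x y : 0 <= vdist n x y.
Proof. apply sqrt_pos. Qed.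

Lemma sum_small n (b : R -> vec) (a : vec) s0 :
  (forall j, (j <= n)%nat -> continuity_pt (fun s => b s j) s0 /\ b s0 j = a j) ->
  forall r, r > 0 -> exists d, d > 0 /\ forall s, Rabs (s - s0) < d ->
    sum_f_R0 (fun j => (b s j - a j) * (b s j - a j)) n < r.
Proof.
  intros H. induction n; intros r Hr.
  - destruct (H 0%nat (le_n _)) as [Hc Ha].
    destruct (Hc (sqrt r)) as [al [Hal Hal2]]. apply sqrt_lt_R0; auto.
    exists al; split; auto. intros s Hs. simpl.
    destruct (Req_dec s s0) as [->|Hne]. rewrite Ha. lra.
    assert (Hd : Rabs (b s 0%nat - a 0%nat) < sqrt r).
    { rewrite <- Ha. apply (Hal2 s). split; auto. unfold D_x, no_cond; split; auto. }
    assert (0 <= sqrt r) by apply sqrt_pos.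
    assert (sqrt r * sqrt r = r) by (apply sqrt_sqrt; lra).
    assert (Habs : Rabs (b s 0%nat - a 0%nat) * Rabs (b s 0%nat - a 0%nat) < r).
    { assert (0 <= Rabs (b s 0%nat - a 0%nat)) by apply Rabs_pos. nra. }
    rewrite <- Rabs_mult in Habs. rewrite Rabs_pos_eq in Habs by apply sqnn. auto.
  - destruct (IHn (fun j Hj => H j (Nat.le_le_succ_r _ _ Hj)) (r/2)) as [d1 [Hd1 Hs1]]; [lra|].
    destruct (H (S n) (le_n _)) as [Hc Ha].
    destruct (Hc (sqrt (r/2))) as [al [Hal Hal2]]. apply sqrt_lt_R0; lra.
    exists (Rmin d1 al); split. apply Rmin_pos; lra.
    intros s Hs. simpl. 
    assert (Hs1' : Rabs (s - s0) < d1) by (apply Rlt_le_trans with (1 := Hs); apply Rmin_l).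
    assert (Hs2' : Rabs (s - s0) < al) by (apply Rlt_le_trans with (1 := Hs); apply Rmin_r).
    specialize (Hs1 s Hs1').
    assert ((b s (S n) - a (S n)) * (b s (S n) - a (S n)) < r/2); [|lra].
    destruct (Req_dec s s0) as [->|Hne]. rewrite Ha. lra.
    assert (Hd : Rabs (b s (S n) - a (S n)) < sqrt (r/2)).
    { rewrite <- Ha. apply (Hal2 s). split; auto. unfold D_x, no_cond; split; auto. }
    assert (0 <= sqrt (r/2)) by apply sqrt_pos.
    assert (sqrt (r/2) * sqrt (r/2) = r/2) by (apply sqrt_sqrt; lra).
    assert (Habs : Rabs (b s (S n) - a (S n)) * Rabs (b s (S n) - a (S n)) < r/2).
    { assert (0 <= Rabs (b s (S n) - a (S n))) by apply Rabs_pos. nra. }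
    rewrite <- Rabs_mult in Habs. rewrite Rabs_pos_eq in Habs by apply sqnn. auto.
Qed.

Lemma vdist_small n (b : R -> vec) (a : vec) s0 :
  (forall j, (j <= n)%nat -> continuity_pt (fun s => b s j) s0 /\ b s0 j = a j) ->
  forall r, r > 0 -> exists d, d > 0 /\ forall s, Rabs (s - s0) < d -> vdist n (b s) a < r.
Proof.
  intros H r Hr. destruct (sum_small n b a s0 H (r*r)) as [d [Hd Hs]]. nra.
  exists d; split; auto. intros s Hs'. rewrite vdist_sq. rewrite <- (sqrt_square r) by lra.
  apply sqrt_lt_1_alt. split; [apply cond_pos_sum; intros; apply sqnn| auto].
Qed.

Lemma deriv_cont f x l : derivable_pt_lim f x l -> continuity_pt f x.
Proof. intros H. apply derivable_continuous_pt. exists l; auto. Qed.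

Lemma cont_veq n U g x y : cont_on n U g -> U x -> veq n x y -> g x = g y.
Proof.
  intros Hc Hx Hv. destruct (Req_dec (g x) (g y)) as [E|Ne]; auto.
  destruct (Hc x Hx (Rabs (g y - g x))) as [d [Hd H]].
  apply Rabs_pos_lt; intro; apply Ne; lra.
  specialize (H y). rewrite (vdist_veq0 n x y Hv) in H. specialize (H Hd). lra.
Qed.

Lemma mvt_bound (f f' : R -> R) u v M :
  (forall c, Rmin u v <= c <= Rmax u v -> derivable_pt_lim f c (f' c) /\ Rabs (f' c) <= M) ->
  Rabs (f v - f u) <= M * Rabs (v - u).
Proof.
  intros H. destruct (Rtotal_order u v) as [Hl|[He|Hg]].
  - destruct (MVT_cor2 f f' u v Hl) as [c [Hc1 Hc2]].
    { intros c Hc. apply H. rewrite Rmin_left, Rmax_right; lra. }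
    rewrite Hc1, Rabs_mult. apply Rmult_le_compat_r. apply Rabs_pos.
    apply H. rewrite Rmin_left, Rmax_right; lra.
  - subst. replace (f v - f v) with 0 by ring. replace (v - v) with 0 by ring. rewrite Rabs_R0.
    assert (0 <= M). { destruct (H v) as [_ Hm]. rewrite Rmin_left, Rmax_left; lra. pose proof (Rabs_pos (f' v)); lra. }
    lra.
  - destruct (MVT_cor2 f f' v u Hg) as [c [Hc1 Hc2]].
    { intros c Hc. apply H. rewrite Rmin_right, Rmax_left; lra. }
    rewrite <- Rabs_Ropp, <- (Rabs_Ropp (v - u)). replace (- (f v - f u)) with (f u - f v) by ring.
    replace (- (v - u)) with (u - v) by ring.
    rewrite Hc1, Rabs_mult. apply Rmult_le_compat_r. apply Rabs_pos.
    apply H. rewrite Rmin_right, Rmax_left; lra.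
Qed.

Definition zz (a b : vec) (k : nat) : vec := fun j => if Nat.ltb j k then b j else a j.

Lemma zz0 a b : zz a b 0 = a.
Proof. extensionality j. unfold zz. destruct j; reflexivity. Qed.

Lemma zzS a b k : zz a b (S k) = upd (zz a b k) k (b k).
Proof.
  extensionality j. unfold zz, upd.
  destruct (Nat.eqb_spec j k) as [->|Hne].
  - replace (Nat.ltb k (S k)) with true; auto. symmetry; apply Nat.ltb_lt; lia.
  - destruct (Nat.ltb_spec j (S k)); destruct (Nat.ltb_spec j k); auto; lia.
Qed.

Lemma zz_k a b k : upd (zz a b k) k (a k) = zz a b k.
Proof.
  extensionality j. unfold zz, upd.
  destruct (Nat.eqb_spec j k) as [->|Hne]; auto.
  replace (Nat.ltb k k) with false; auto. symmetry; apply Nat.ltb_ge; lia.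
Qed.

Lemma between_abs u v t a : Rmin u v <= t <= Rmax u v -> u = a -> Rabs (t - a) <= Rabs (v - a).
Proof.
  intros H ->. unfold Rmin, Rmax in H. destruct (Rle_dec a v).
  - rewrite !Rabs_pos_eq; lra.
  - rewrite !Rabs_left1; lra.
Qed.

Lemma zz_dist n a b k t : Rmin (a k) (b k) <= t <= Rmax (a k) (b k) ->
  vdist n (upd (zz a b k) k t) a <= vdist n b a.
Proof.
  intros Ht. apply vdist_le. intros j Hj. unfold upd, zz.
  destruct (Nat.eqb_spec j k) as [->|Hne].
  - eapply between_abs; eauto.
  - destruct (Nat.ltb j k). lra. replace (a j - a j) with 0 by ring. rewrite Rabs_R0. apply Rabs_pos.
Qed.

Lemma deriv0_bound f s0 e : derivable_pt_lim f s0 0 -> e > 0 ->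
  exists d, d > 0 /\ forall s, Rabs (s - s0) < d -> Rabs (f s - f s0) <= e * Rabs (s - s0).
Proof.
  intros D He. destruct (D e He) as [del Hdel]. exists del; split. apply cond_pos.
  intros s Hs. destruct (Req_dec s s0) as [->|Hne].
  - replace (f s0 - f s0) with 0 by ring. rewrite Rabs_R0. pose proof (Rabs_pos (s0 - s0)). nra.
  - specialize (Hdel (s - s0)). replace (s0 + (s - s0)) with s in Hdel by ring.
    assert (Hh : s - s0 <> 0) by lra. specialize (Hdel Hh Hs).
    rewrite Rminus_0_r in Hdel. unfold Rdiv in Hdel. rewrite Rabs_mult, Rabs_inv in Hdel.
    assert (Hp : 0 < Rabs (s - s0)) by (apply Rabs_pos_lt; auto).
    apply Rmult_lt_compat_r with (r := Rabs (s - s0)) in Hdel; auto.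
    rewrite Rmult_assoc, Rinv_l in Hdel by lra. lra.
Qed.

Lemma chain0 n (g : vec -> R) (a : vec) eps (b : R -> vec) s0 :
  eps > 0 -> smooth_on n (ball n a eps) g ->
  veq n (b s0) a ->
  (forall j, (j <= n)%nat -> derivable_pt_lim (fun s => b s j) s0 0) ->
  derivable_pt_lim (fun s => g (b s)) s0 0.
Proof.
  intros Heps [F [HFg HF]] Hb0 Hbd.
  assert (Hcont : forall j, (j <= n)%nat -> continuity_pt (fun s => b s j) s0 /\ b s0 j = a j).
  { intros j Hj; split; [eapply deriv_cont; eauto| apply Hb0; auto]. }
  assert (Ha : ball n a eps a). { unfold ball. rewrite vdist_veq0; [lra| intros i _; auto]. }
  destruct (HF g HFg) as [Hgc Hgp].
  assert (claim : forall k, (k <= S n)%nat -> forall e, e > 0 -> exists d, d > 0 /\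
     forall s, Rabs (s - s0) < d -> Rabs (g (zz a (b s) k) - g a) <= e * Rabs (s - s0)).
  { induction k; intros Hk e He.
    - exists 1; split; [lra|]. intros s _. rewrite zz0. replace (g a - g a) with 0 by ring.
      rewrite Rabs_R0. pose proof (Rabs_pos (s - s0)); nra.
    - destruct (IHk ltac:(lia) (e/2) ltac:(lra)) as [d3 [Hd3 H3]].
      destruct (Hgp k ltac:(lia)) as [hk [Fhk Phk]].
      destruct (HF hk Fhk) as [Hhc _].
      destruct (Hhc a Ha 1 ltac:(lra)) as [dc [Hdc Hc]].
      set (M := Rabs (hk a) + 1).
      assert (HM : M > 0) by (unfold M; pose proof (Rabs_pos (hk a)); lra).
      destruct (vdist_small n b a s0 Hcont (Rmin eps dc)) as [d1 [Hd1 H1]].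
      { apply Rmin_pos; lra. }
      destruct (deriv0_bound (fun s => b s k) s0 (e / (2 * M)) (Hbd k ltac:(lia))) as [d2 [Hd2 H2]].
      { apply Rdiv_lt_0_compat; lra. }
      exists (Rmin d1 (Rmin d2 d3)); split. repeat apply Rmin_pos; lra.
      intros s Hs.
      assert (Hs1 : Rabs (s - s0) < d1) by (eapply Rlt_le_trans; [exact Hs| apply Rmin_l]).
      assert (Hs2 : Rabs (s - s0) < d2) by (eapply Rlt_le_trans; [exact Hs| eapply Rle_trans; [apply Rmin_r|apply Rmin_l]]).
      assert (Hs3 : Rabs (s - s0) < d3) by (eapply Rlt_le_trans; [exact Hs| eapply Rle_trans; [apply Rmin_r|apply Rmin_r]]).
      specialize (H1 s Hs1). specialize (H2 s Hs2). specialize (H3 s Hs3).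
      simpl in H2. rewrite (Hb0 k ltac:(lia)) in H2.
      assert (Hmvt : Rabs (g (upd (zz a (b s) k) k (b s k)) - g (upd (zz a (b s) k) k (a k)))
                      <= M * Rabs (b s k - a k)).
      { apply (mvt_bound (fun t => g (upd (zz a (b s) k) k t)) (fun t => hk (upd (zz a (b s) k) k t))).
        intros c Hcr.
        assert (Hzd : vdist n (upd (zz a (b s) k) k c) a <= vdist n (b s) a).
        { apply zz_dist. unfold zz in Hcr.
          replace (Nat.ltb k k) with false in Hcr by (symmetry; apply Nat.ltb_ge; lia). exact Hcr. }
        assert (Hin : ball n a eps (upd (zz a (b s) k) k c)).
        { unfold ball. eapply Rle_lt_trans; [exact Hzd|]. eapply Rlt_le_trans; [exact H1| apply Rmin_l]. }
        split.
        - pose proof (Phk _ Hin) as P. unfold partial_at in P. rewrite upd_eq in P. eapply dpl_ext; [|exact P]. intros t; simpl; rewrite upd_upd; auto.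
        - assert (Hcl : vdist n (upd (zz a (b s) k) k c) a < dc).
          { eapply Rle_lt_trans; [exact Hzd|]. eapply Rlt_le_trans; [exact H1| apply Rmin_r]. }
          pose proof (Hc _ Hcl) as Hc0. unfold M.
          pose proof (Rabs_triang_inv (hk (upd (zz a (b s) k) k c)) (hk a)). lra. }
      rewrite zz_k, <- zzS in Hmvt.
      replace (g (zz a (b s) (S k)) - g a) with
        ((g (zz a (b s) (S k)) - g (zz a (b s) k)) + (g (zz a (b s) k) - g a)) by ring.
      eapply Rle_trans; [apply Rabs_triang|].
      assert (M * Rabs (b s k - a k) <= M * (e / (2 * M) * Rabs (s - s0))).
      { apply Rmult_le_compat_l; lra. }
      replace (M * (e / (2 * M) * Rabs (s - s0))) with (e/2 * Rabs (s - s0)) in H by (field; lra).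
      lra. }
  intros e He.
  destruct (claim (S n) (le_n _) (e/2) ltac:(lra)) as [d [Hd H]].
  destruct (vdist_small n b a s0 Hcont eps Heps) as [d1 [Hd1 H1]].
  assert (Hm : 0 < Rmin d d1) by (apply Rmin_pos; lra).
  exists (mkposreal _ Hm). intros h Hh Hh2. simpl in Hh2.
  assert (Hh3 : Rabs (s0 + h - s0) < d) by (replace (s0 + h - s0) with h by ring; eapply Rlt_le_trans; [exact Hh2|apply Rmin_l]).
  assert (Hh4 : Rabs (s0 + h - s0) < d1) by (replace (s0 + h - s0) with h by ring; eapply Rlt_le_trans; [exact Hh2|apply Rmin_r]).
  specialize (H _ Hh3). specialize (H1 _ Hh4).
  replace (s0 + h - s0) with h in H by ring.
  assert (Hzb : veq n (zz a (b (s0 + h)) (S n)) (b (s0 + h))).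
  { intros j Hj. unfold zz. replace (Nat.ltb j (S n)) with true; auto. symmetry; apply Nat.ltb_lt; lia. }
  assert (Hzin : ball n a eps (zz a (b (s0 + h)) (S n))).
  { unfold ball. rewrite (vdist_veq_l n _ (b (s0 + h))); auto. }
  rewrite (cont_veq n _ g _ _ Hgc Hzin Hzb) in H.
  rewrite <- (cont_veq n _ g _ _ Hgc Ha (fun i Hi => eq_sym (Hb0 i Hi))).
  rewrite Rminus_0_r. unfold Rdiv. rewrite Rabs_mult, Rabs_inv.
  assert (Hp : 0 < Rabs h) by (apply Rabs_pos_lt; auto).
  apply Rmult_le_compat_r with (r := / Rabs h) in H; [|left; apply Rinv_0_lt_compat; auto].
  rewrite Rmult_assoc, Rinv_r in H by lra. lra.
Qed.

Inductive ex := EC (r : R) | EV (j : nat) | EAdd (a b : ex) | EMul (a b : ex) | EIS (a : ex).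

Fixpoint ev (e : ex) (x : vec) : R :=
  match e with
  | EC r => r | EV j => x j | EAdd a b => ev a x + ev b x | EMul a b => ev a x * ev b x
  | EIS a => / sqrt (ev a x) end.

Fixpoint dx (e : ex) (i : nat) : ex :=
  match e with
  | EC _ => EC 0
  | EV j => EC (if Nat.eqb j i then 1 else 0)
  | EAdd a b => EAdd (dx a i) (dx b i)
  | EMul a b => EAdd (EMul (dx a i) b) (EMul a (dx b i))
  | EIS a => EMul (EMul (EC (-/2)) (dx a i)) (EMul (EIS a) (EMul (EIS a) (EIS a)))
  end.

Fixpoint wf (n : nat) (U : vec -> Prop) (e : ex) : Prop :=
  match e with
  | EC _ => True | EV j => (j <= n)%nat
  | EAdd a b => wf n U a /\ wf n U b | EMul a b => wf n U a /\ wf n U b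
  | EIS a => wf n U a /\ forall x, U x -> ev a x > 0 end.

Lemma wf_dx n U e i : wf n U e -> wf n U (dx e i).
Proof. induction e; simpl; intuition. Qed.

Lemma dx_ok n U e x i : wf n U e -> U x ->
  derivable_pt_lim (fun t => ev e (upd x i t)) (x i) (ev (dx e i) x).
Proof.
  intros Hw Hx. induction e; simpl in *.
  - apply derivable_pt_lim_const.
  - unfold upd. destruct (Nat.eqb j i).
    + apply derivable_pt_lim_id.
    + apply derivable_pt_lim_const.
  - destruct Hw. apply (derivable_pt_lim_plus (fun t => ev e1 (upd x i t)) (fun t => ev e2 (upd x i t))); auto.
  - destruct Hw as [H1 H2].
    pose proof (derivable_pt_lim_mult (fun t => ev e1 (upd x i t)) (fun t => ev e2 (upd x i t)) _ _ _ (IHe1 H1) (IHe2 H2)) as D.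
    simpl in D. rewrite upd_same in D. exact D.
  - destruct Hw as [H1 Hp]. specialize (IHe H1). set (A := ev e x) in *.
    assert (HA : A > 0) by (apply Hp; auto).
    assert (HsA : sqrt A > 0) by (apply sqrt_lt_R0; auto).
    pose proof (derivable_pt_lim_comp (fun t => ev e (upd x i t)) sqrt (x i) _ (/ (2 * sqrt A)) IHe) as D1.
    simpl in D1. rewrite upd_same in D1. specialize (D1 (derivable_pt_lim_sqrt A HA)).
    pose proof (derivable_pt_lim_div (fun _ => 1) (comp sqrt (fun t => ev e (upd x i t))) (x i) 0 _
                 (derivable_pt_lim_const 1 (x i)) D1) as D2.
    unfold comp in D2. rewrite upd_same in D2. fold A in D2. specialize (D2 ltac:(lra)).
    match goal with |- derivable_pt_lim _ _ ?v => replace v with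
      ((0 * sqrt A - / (2 * sqrt A) * ev (dx e i) x * 1) / (sqrt A)²) end.
    + eapply dpl_ext; [|exact D2]. intro t. unfold div_fct, comp. unfold Rdiv. ring.
    + unfold Rsqr. field. lra.
Qed.

Definition ctat n (g : vec -> R) x := forall e, e > 0 -> exists d, d > 0 /\
  forall y, vdist n y x < d -> Rabs (g y - g x) < e.

Lemma ctat_const n r x : ctat n (fun _ => r) x.
Proof. intros e He. exists 1; split; [lra|]. intros; replace (r - r) with 0 by ring; rewrite Rabs_R0; lra. Qed.

Lemma ctat_coord n j x : (j <= n)%nat -> ctat n (fun y => y j) x.
Proof. intros Hj e He. exists e; split; auto. intros y Hy. pose proof (coord_le n y x j Hj). lra. Qed.

Lemma ctat_add n f g x : ctat n f x -> ctat n g x -> ctat n (fun y => f y + g y) x.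
Proof.
  intros Hf Hg e He. destruct (Hf (e/2) ltac:(lra)) as [d1 [Hd1 H1]].
  destruct (Hg (e/2) ltac:(lra)) as [d2 [Hd2 H2]].
  exists (Rmin d1 d2); split; [apply Rmin_pos; lra|]. intros y Hy.
  assert (A1 : vdist n y x < d1) by (eapply Rlt_le_trans; [exact Hy|apply Rmin_l]).
  assert (A2 : vdist n y x < d2) by (eapply Rlt_le_trans; [exact Hy|apply Rmin_r]).
  specialize (H1 y A1); specialize (H2 y A2).
  replace (f y + g y - (f x + g x)) with ((f y - f x) + (g y - g x)) by ring.
  eapply Rle_lt_trans; [apply Rabs_triang|lra].
Qed.

Lemma ctat_mul n f g x : ctat n f x -> ctat n g x -> ctat n (fun y => f y * g y) x.
Proof.
  intros Hf Hg e He.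
  set (M := Rabs (g x) + 1). set (N := Rabs (f x) + 1).
  assert (HM : M > 0) by (unfold M; pose proof (Rabs_pos (g x)); lra).
  assert (HN : N > 0) by (unfold N; pose proof (Rabs_pos (f x)); lra).
  destruct (Hf (e/(2*M))) as [d1 [Hd1 H1]]. apply Rdiv_lt_0_compat; lra.
  destruct (Hg (Rmin 1 (e/(2*N)))) as [d2 [Hd2 H2]]. apply Rmin_pos; [lra|apply Rdiv_lt_0_compat; lra].
  exists (Rmin d1 d2); split; [apply Rmin_pos; lra|]. intros y Hy.
  assert (A1 : vdist n y x < d1) by (eapply Rlt_le_trans; [exact Hy|apply Rmin_l]).
  assert (A2 : vdist n y x < d2) by (eapply Rlt_le_trans; [exact Hy|apply Rmin_r]).
  specialize (H1 y A1); specialize (H2 y A2).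
  assert (B1 : Rabs (g y - g x) < 1) by (eapply Rlt_le_trans; [exact H2|apply Rmin_l]).
  assert (B2 : Rabs (g y - g x) < e/(2*N)) by (eapply Rlt_le_trans; [exact H2|apply Rmin_r]).
  assert (Bg : Rabs (g y) <= M) by (unfold M; pose proof (Rabs_triang_inv (g y) (g x)); lra).
  replace (f y * g y - f x * g x) with ((f y - f x) * g y + f x * (g y - g x)) by ring.
  eapply Rle_lt_trans; [apply Rabs_triang|]. rewrite !Rabs_mult.
  assert (C1 : Rabs (f y - f x) * Rabs (g y) <= Rabs (f y - f x) * M).
  { apply Rmult_le_compat_l; [apply Rabs_pos|lra]. }
  assert (C2 : Rabs (f y - f x) * M < e/(2*M) * M) by (apply Rmult_lt_compat_r; lra).
  assert (C3 : Rabs (f x) * Rabs (g y - g x) <= N * (e/(2*N))).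
  { apply Rmult_le_compat; try apply Rabs_pos; [unfold N; lra | lra]. }
  replace (e/(2*M) * M) with (e/2) in C2 by (field; lra).
  replace (N * (e/(2*N))) with (e/2) in C3 by (field; lra).
  lra.
Qed.

Lemma ctat_comp n g x (k : R -> R) : ctat n g x -> continuity_pt k (g x) -> ctat n (fun y => k (g y)) x.
Proof.
  intros Hg Hk e He. destruct (Hk e He) as [al [Hal H]].
  destruct (Hg al Hal) as [d [Hd H2]]. exists d; split; auto. intros y Hy.
  destruct (Req_dec (g y) (g x)) as [E|Ne].
  - rewrite E. replace (k (g x) - k (g x)) with 0 by ring. rewrite Rabs_R0; lra.
  - apply (H (g y)). split. split; auto. exact I. simpl. unfold R_dist. auto.
Qed.

Lemma cont_invsqrt v : v > 0 -> continuity_pt (fun v => / sqrt v) v.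
Proof.
  intros Hv. apply (continuity_pt_inv sqrt). apply continuity_pt_sqrt; lra.
  pose proof (sqrt_lt_R0 v Hv); lra.
Qed.

Lemma ev_cont n U e x : wf n U e -> U x -> ctat n (ev e) x.
Proof.
  intros Hw Hx. induction e; simpl in *.
  - apply ctat_const.
  - apply ctat_coord; auto.
  - destruct Hw; apply ctat_add; auto.
  - destruct Hw; apply ctat_mul; auto.
  - destruct Hw as [H1 Hp]. apply (ctat_comp n (ev e) x (fun v => / sqrt v)); auto.
    apply cont_invsqrt; auto.
Qed.

Lemma smooth_ev n U e : wf n U e -> smooth_on n U (ev e).
Proof.
  intros Hw. exists (fun g => exists e, wf n U e /\ g = ev e). split; [eauto|].
  intros g [e' [Hw' ->]]. split.
  - intros x Hx. apply (ev_cont n U); auto.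
  - intros i Hi. exists (ev (dx e' i)). split. exists (dx e' i); split; auto; apply wf_dx; auto.
    intros x Hx. unfold partial_at. apply (dx_ok n U); auto.
Qed.

Lemma sum_lin3 m a b c (f g h : nat -> R) :
  sum_f_R0 (fun j => a * f j + b * g j + c * h j) m = a * sum_f_R0 f m + b * sum_f_R0 g m + c * sum_f_R0 h m.
Proof. induction m; simpl; [ring| rewrite IHm; ring]. Qed.

Fixpoint esum (m : nat) (f : nat -> ex) : ex :=
  match m with O => f O | S m => EAdd (esum m f) (f (S m)) end.
Lemma ev_esum m f x : ev (esum m f) x = sum_f_R0 (fun j => ev (f j) x) m.
Proof. induction m; simpl; auto. rewrite IHm; auto. Qed.
Lemma wf_esum n U m f : (forall j, (j <= m)%nat -> wf n U (f j)) -> wf n U (esum m f).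
Proof. induction m; intros H; simpl. apply H; lia. split; [apply IHm; intros; apply H|apply H]; lia. Qed.

Section S.
Variable n : nat.
Variable P : vec.

Definition eplus j := EAdd (EV j) (EC (P j)).
Definition eQ := esum n (fun j => EMul (eplus j) (eplus j)).
Definition epsi i := EMul (eplus i) (EIS eQ).
Definition ephi i := EAdd (EMul (EMul (EC 2) (esum n (fun j => EMul (EV j) (EC (P j))))) (EV i)) (EC (- P i)).
Definition psiF (x : vec) : vec := fun i => ev (epsi i) x.
Definition phiF (y : vec) : vec := fun i => ev (ephi i) y.
Definition Q (x : vec) := sum_f_R0 (fun j => (x j + P j) * (x j + P j)) n.

Lemma ev_eQ x : ev eQ x = Q x.
Proof. unfold eQ. rewrite ev_esum. reflexivity. Qed.
Lemma psiF_val x i : psiF x i = (x i + P i) * / sqrt (Q x).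
Proof. unfold psiF, epsi. simpl. rewrite ev_eQ. auto. Qed.
Lemma phiF_val y i : phiF y i = 2 * dot n y P * y i + - P i.
Proof. unfold phiF, ephi. simpl. rewrite ev_esum. reflexivity. Qed.

Hypothesis HP : dot n P P = 1.

Lemma Q_expand x : Q x = dot n x x + 2 * dot n x P + 1.
Proof.
  rewrite <- HP. transitivity (1 * dot n x x + 2 * dot n x P + 1 * dot n P P); [|ring].
  unfold Q, dot. rewrite <- sum_lin3. apply sum_eq; intros; ring.
Qed.

Lemma ball_sq a x r : veq n a P -> r > 0 -> ball n a r x ->
  sum_f_R0 (fun j => (x j - P j) * (x j - P j)) n < r * r.
Proof.
  intros Ha Hr Hb. unfold ball in Hb. rewrite (vdist_veq_r n x a P Ha), vdist_sq in Hb.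
  set (S := sum_f_R0 _ n) in *.
  assert (0 <= S) by (apply cond_pos_sum; intros; apply sqnn).
  pose proof (sqrt_sqrt S H). pose proof (sqrt_pos S). nra.
Qed.

Lemma Q_pos a x : veq n a P -> ball n a (1/2) x -> Q x > 0.
Proof.
  intros Ha Hb. pose proof (ball_sq a x (1/2) Ha ltac:(lra) Hb) as H.
  assert (Q x >= 7/2 * dot n P P + (-7) * sum_f_R0 (fun j => (x j - P j) * (x j - P j)) n + 0 * sum_f_R0 (fun _ => 0) n).
  { unfold Q, dot. rewrite <- (sum_lin3 n (7/2) (-7) 0 _ _ (fun _ => 0)).
    apply Rle_ge. apply sum_Rle. intros j _. pose proof (sqnn (x j - P j + P j / 4)). nra. }
  rewrite HP in H0. nra.
Qed.

Lemma dotP_pos a y : veq n a P -> ball n a (1/2) y -> dot n y y = 1 -> dot n y P > 0.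
Proof.
  intros Ha Hb Hy. pose proof (ball_sq a y (1/2) Ha ltac:(lra) Hb) as H.
  assert (E : 2 * dot n y P = 1 * dot n y y + 1 * dot n P P + (-1) * sum_f_R0 (fun j => (y j - P j) * (y j - P j)) n).
  { unfold dot. rewrite <- sum_lin3.
    rewrite scal_sum. apply sum_eq; intros; ring. }
  rewrite HP, Hy in E. nra.
Qed.

Lemma psiF_sphere x : Q x > 0 -> sphere n (psiF x).
Proof.
  intros Hq. unfold sphere, dot. 
  transitivity (/ sqrt (Q x) * / sqrt (Q x) * Q x).
  - transitivity (sum_f_R0 (fun j => (x j + P j) * (x j + P j) * (/ sqrt (Q x) * / sqrt (Q x))) n).
    apply sum_eq; intros; rewrite psiF_val; ring.
    rewrite <- scal_sum. reflexivity.
  - pose proof (sqrt_sqrt (Q x) ltac:(lra)). pose proof (sqrt_lt_R0 _ Hq).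
    set (r := sqrt (Q x)) in *. rewrite <- H. field; lra.
Qed.

Lemma phi_psi x i : Q x > 0 -> dot n x x = 1 -> phiF (psiF x) i = x i.
Proof.
  intros Hq Hx. rewrite phiF_val, psiF_val.
  assert (E : dot n (psiF x) P = / sqrt (Q x) * (dot n x P + 1)).
  { rewrite <- HP. unfold dot. rewrite <- plus_sum. rewrite scal_sum. apply sum_eq; intros.
    rewrite psiF_val; ring. }
  rewrite E. pose proof (Q_expand x) as Qe. rewrite Hx in Qe.
  pose proof (sqrt_sqrt (Q x) ltac:(lra)). pose proof (sqrt_lt_R0 _ Hq).
  set (r := sqrt (Q x)) in *. set (c := dot n x P) in *.
  replace (2 * (/ r * (c + 1)) * ((x i + P i) * / r)) with (2 * (c+1) * (x i + P i) / (r * r)) by (field; lra).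
  rewrite H, Qe. rewrite Qe in Hq. field. lra.
Qed.

Lemma phiF_sphere y : dot n y y = 1 -> sphere n (phiF y).
Proof.
  intros Hy. unfold sphere. set (c := dot n y P).
  transitivity ((4 * c * c) * dot n y y + (-4 * c) * dot n y P + 1 * dot n P P).
  - unfold dot. rewrite <- sum_lin3. apply sum_eq; intros. rewrite phiF_val. fold c. ring.
  - rewrite Hy, HP. fold c. ring.
Qed.

Lemma psi_phi y i : dot n y y = 1 -> dot n y P > 0 -> psiF (phiF y) i = y i.
Proof.
  intros Hy Hc. rewrite psiF_val. set (c := dot n y P) in *.
  assert (E : Q (phiF y) = (2 * c) * (2 * c)).
  { unfold Q. transitivity ((4 * c * c) * dot n y y + 0 * sum_f_R0 (fun _ => 0) n + 0 * sum_f_R0 (fun _ => 0) n).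
    unfold dot. rewrite <- (sum_lin3 n _ 0 0 _ (fun _ => 0) (fun _ => 0)). apply sum_eq; intros.
    rewrite phiF_val. fold c. ring. rewrite Hy. ring. }
  rewrite E, sqrt_square by lra. rewrite phiF_val. fold c. field. lra.
Qed.

Lemma psi_ort (u : vec) t i : dot n u u = 1 -> dot n P u = t -> t * t < 1 ->
  psiF (fun j => P j + - (2 * t) * u j) i =
  / sqrt (1 - t ^ 2) * (P i + - t * u i).
Proof.
  intros Hu Ht Ht1. rewrite psiF_val.
  assert (E : Q (fun j => P j + - (2 * t) * u j) = 4 * (1 - t ^ 2)).
  { unfold Q. transitivity (4 * dot n P P + (- 8 * t) * dot n P u + (4 * t * t) * dot n u u).
    unfold dot. rewrite <- sum_lin3. apply sum_eq; intros. ring.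
    rewrite HP, Hu, Ht. ring. }
  rewrite E, sqrt_mult by nra.
  replace 4 with (2 * 2) by ring. rewrite sqrt_square by lra.
  assert (0 < sqrt (1 - t^2)) by (apply sqrt_lt_R0; nra).
  field. lra.
Qed.

End S.

Lemma sum_zero (f : nat -> R) m : (forall j, (j <= m)%nat -> f j = 0) -> sum_f_R0 f m = 0.
Proof.
  intros H. induction m; simpl. apply H; lia. rewrite IHm, H; [ring|lia|intros; apply H; lia].
Qed.

Lemma dot_span n m (c : nat -> R) (u : nat -> vec) w :
  dot n (fun k => sum_f_R0 (fun j => c j * u j k) m) w = sum_f_R0 (fun j => c j * dot n (u j) w) m.
Proof.
  induction m.
  - simpl. unfold dot. rewrite scal_sum. apply sum_eq; intros; ring.
  - simpl. rewrite <- IHm. unfold dot. rewrite scal_sum, <- plus_sum. apply sum_eq; intros; ring.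
Qed.

Lemma cont_nbhd f x e : continuity_pt f x -> e > 0 ->
  exists d, d > 0 /\ forall y, Rabs (y - x) < d -> Rabs (f y - f x) < e.
Proof.
  intros Hc He. destruct (Hc e He) as [al [Hal H]]. exists al; split; auto.
  intros y Hy. destruct (Req_dec y x) as [->|Ne].
  - replace (f x - f x) with 0 by ring. rewrite Rabs_R0; lra.
  - apply (H y). split; [split; [exact I| auto]| exact Hy].
Qed.

Theorem mainTheorem10 (n : nat) (I : R -> Prop) (gamma : R -> vec)
  (u : nat -> R -> vec) (kappa : nat -> R -> R) (un : R -> vec) (s0 : R) (P : vec) :
  (2 <= n)%nat ->
  is_open_interval I ->
  spherical_unit_speed n I gamma u kappa ->
  spherical_dual n I u un ->
  (forall s, I s -> exists d, vderiv n un s d /\ ~ veq n d vzero) ->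
  I s0 ->
  in_S_n_minus_2 n u un s0 P ->
  L_equiv n I s0 (ort n P un) (ped n P un) /\
  ~ A_equiv n I s0 (ort n P un) un.
Proof.
  intros Hn [_ [_ Hopen]] [Hsm [Hsph [Hu0 [Hk0 [Hgd Hrec]]]]] Hdual Hnd Hs0 [HPs [_ [_ [c Hc]]]].
  assert (HP1 : dot n P P = 1) by exact HPs.
  assert (Hun : forall s, I s -> dot n (un s) (un s) = 1) by (intros s Hs; apply (Hdual s Hs)).
  assert (Horth : forall j s, (j < n)%nat -> I s -> dot n (u j s) (un s) = 0)
    by (intros j s Hj Hs; apply (Hdual s Hs); auto).
  assert (Hspan : forall w, (forall j, (j <= n - 2)%nat -> dot n (u j s0) w = 0) -> dot n P w = 0).
  { intros w Hw. rewrite (dot_ext n P w _ w Hc (fun _ _ => eq_refl)). rewrite dot_span.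
    apply sum_zero. intros j Hj. rewrite Hw; auto; ring. }
  assert (t0 : dot n P (un s0) = 0).
  { apply Hspan. intros j Hj. apply Horth; auto; lia. }
  destruct (Hnd s0 Hs0) as [D [HD HDnz]].
  assert (Htd : derivable_pt_lim (fun s => dot n P (un s)) s0 (dot n P D)).
  { pose proof (dot_deriv n (fun _ => P) un (fun _ => 0) D s0 (vderiv_const n P s0) HD) as H.
    rewrite dot_zero_l, Rplus_0_l in H. exact H. }
  assert (Hort0 : veq n (ort n P un s0) P).
  { intros i _. unfold ort, vadd, vscale. rewrite t0. ring. }
  assert (Hrel : forall s, I s -> dot n P (un s) * dot n P (un s) < 1 ->
     veq n (ped n P un s) (psiF n P (ort n P un s))).
  { intros s Hs Ht i _. symmetry. apply (psi_ort n P HP1 (un s)); auto. }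
  split.
  -
    assert (Hped0 : veq n (ped n P un s0) P).
    { intros i _. unfold ped, vadd, vscale. rewrite t0.
      replace (1 - 0 ^ 2) with 1 by ring. rewrite sqrt_1. field. }
    destruct (cont_nbhd _ _ (1/2) (deriv_cont _ _ _ Htd) ltac:(lra)) as [d [Hd Hdd]].
    exists (psiF n P). split.
    + exists (1/2). split; [lra|]. exists (phiF n P). split; [|split; [|split; [|split]]].
      * intros i Hi. rewrite <- (Hrel s0 Hs0 ltac:(rewrite t0; lra) i Hi). auto.
      * intros i Hi. apply (smooth_ev n _ (epsi n P i)). simpl. split; [split; auto|].
        split. unfold eQ. apply wf_esum. intros j Hj; simpl; auto.
        intros x Hx. rewrite ev_eQ. apply (Q_pos n P HP1 (ort n P un s0)); auto.
      * intros i Hi. apply (smooth_ev n _ (ephi n P i)). simpl. split; auto. split; auto. split; auto.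
        apply wf_esum. intros j Hj; simpl; auto.
      * intros x Hx Hb. assert (Hq : Q n P x > 0) by (apply (Q_pos n P HP1 (ort n P un s0)); auto).
        split. apply psiF_sphere; auto. intros i _. apply phi_psi; auto.
      * intros y Hy Hb. split. apply phiF_sphere; auto. intros i _. apply psi_phi; auto.
        apply (dotP_pos n P HP1 (ped n P un s0)); auto.
    + destruct (Hopen s0 Hs0) as [eI [HeI HI]].
      exists (Rmin d eI); split; [apply Rmin_pos; lra|]. intros s Hs Hsd.
      apply Hrel; auto. assert (Rabs (s - s0) < d) by (eapply Rlt_le_trans; [exact Hsd|apply Rmin_l]).
      specialize (Hdd s H). rewrite t0, Rminus_0_r in Hdd.
      apply Rabs_def2 in Hdd. nra.
  -
    assert (HuD : forall j, (j <= n - 2)%nat -> dot n (u j s0) D = 0).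
    { intros j Hj. destruct (Hrec (S j) s0 ltac:(lia) Hs0) as [dj [Hdj Hw]]. cbv zeta in Hw.
      destruct Hw as [_ [Hkp Hveq]].
      replace (S j - 1)%nat with j in * by lia.
      set (m := (S j - 2)%nat) in *. assert (Hm : (m < n)%nat) by (unfold m; lia).
      assert (Hdj0 : dot n dj (un s0) = 0).
      { rewrite (dot_ext n dj (un s0) (fun k => kappa (S j) s0 * u (S j) s0 k + (- kappa j s0) * u m s0 k) (un s0)).
        rewrite dot_lin, !Horth; auto; [ring|lia].
        intros k Hk. rewrite (Hveq k Hk). unfold vscale, vadd. field. lra.
        intros k _; auto. }
      pose proof (dot_deriv n (u j) un dj D s0 Hdj HD) as Hder.
      rewrite Hdj0, Rplus_0_l in Hder.
      destruct (Hopen s0 Hs0) as [eI [HeI HI]].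
      symmetry. apply (dpl_unique_loc (fun _ => 0) (fun s => dot n (u j s) (un s)) s0 0 _ eI HeI).
      intros t Ht. symmetry. apply Horth; auto; lia.
      apply derivable_pt_lim_const. exact Hder. }
    assert (HPD : dot n P D = 0) by (apply Hspan; auto).
    rewrite HPD in Htd.
    assert (Hortd : forall j, (j <= n)%nat -> derivable_pt_lim (fun s => ort n P un s j) s0 0).
    { intros j Hj.
      assert (H1 : derivable_pt_lim (fun s => - (2 * dot n P (un s))) s0 (- (2 * 0))).
      { eapply dpl_ext; [|apply derivable_pt_lim_opp; apply derivable_pt_lim_scal; exact Htd].
        intro t; reflexivity. }
      pose proof (derivable_pt_lim_mult _ (fun s => un s j) s0 _ _ H1 (HD j Hj)) as H2.
      pose proof (derivable_pt_lim_plus (fct_cte (P j)) _ s0 _ _ (derivable_pt_lim_const (P j) s0) H2) as H3.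
      simpl in H3. rewrite t0 in H3. 
      replace 0 with (0 + (- (2 * 0) * un s0 j + - (2 * 0) * D j)) by ring.
      eapply dpl_ext; [|exact H3]. intro t. reflexivity. }
    intros [ph [ps [Hph [Hps [d [Hd Hrel2]]]]]].
    destruct Hph as [eps [Heps [chi [Hph0 [[Fp [Fph HFp]] [[Fc [Fchi HFc]] Hinv]]]]]].
    destruct (HFp ph Fph) as [lp0 [_ Hlp]]. destruct (HFc chi Fchi) as [lc0 [_ Hlc]].
    assert (J0 : Rabs (s0 - s0) < eps) by (rewrite Rminus_diag, Rabs_R0; lra).
    specialize (Hlp s0 J0). specialize (Hlc s0 J0).
    set (lp := lp0 s0) in *. set (lc := lc0 s0) in *.
    assert (Hlclp : lc * lp = 1).
    { rewrite <- Hph0 in Hlc at 1.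
      pose proof (derivable_pt_lim_comp ph chi s0 _ _ Hlp Hlc) as Hcomp.
      apply (dpl_unique_loc (comp chi ph) id s0 _ _ eps Heps); auto.
      intros t Ht. unfold comp, id. apply Hinv. auto.
      apply derivable_pt_lim_id. }
    destruct Hps as [eps' [Heps' [phi' [_ [Hsm' _]]]]].
    apply HDnz. intros i Hi. unfold vzero.
    assert (HL : derivable_pt_lim (fun s => un (ph s) i) s0 (D i * lp)).
    { pose proof (HD i Hi) as Hi'. rewrite <- Hph0 in Hi' at 1.
      exact (derivable_pt_lim_comp ph (fun s => un s i) s0 _ _ Hlp Hi'). }
    assert (HR : derivable_pt_lim (fun s => ps (ort n P un s) i) s0 0).
    { apply (chain0 n (fun x => ps x i) (ort n P un s0) eps' (ort n P un) s0 Heps' (Hsm' i Hi)).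
      intros k _; reflexivity. exact Hortd. }
    destruct (Hopen s0 Hs0) as [eI [HeI HI]].
    assert (E : D i * lp = 0).
    { apply (dpl_unique_loc (fun s => un (ph s) i) (fun s => ps (ort n P un s) i) s0 _ _ (Rmin d eI) ltac:(apply Rmin_pos; lra)); auto.
      intros t Ht. apply Hrel2; auto.
      apply HI. eapply Rlt_le_trans; [exact Ht|apply Rmin_r].
      eapply Rlt_le_trans; [exact Ht|apply Rmin_l]. }
    destruct (Req_dec lp 0) as [Z|NZ]. rewrite Z in Hlclp; lra.
    apply Rmult_integral in E. destruct E; auto. contradiction.
Qed.
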